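(* Let $X\in\mathcal{L}\cap\mathcal{M}(r)$ with $s=\operatorname{rank}(X)$, let $y\in\mathbb{R}^l$ and $\alpha>0$. Set $\beta=\sigma_r(X)/\|\nabla_XL(X;y)\|_2$ if $\nabla_XL(X;y)\ne O$ and $\beta=\infty$ otherwise. Consider the statements (a) $-\nabla_XL(X;y)\in\mathrm{N}^F_{\mathcal{M}(r)}(X)$ (i.e. $X$ is an $F$-stationary point with multiplier $y$); (b) $X\in\Pi_{\mathcal{M}(r)}(X-\alpha\nabla_XL(X;y))$ (i.e. $X$ is an $\alpha$-stationary point with multiplier $y$). Then: (i) (b) implies (a); (ii) if $s=r$ and $\alpha\in(0,\beta]$, then (a) implies (b); (iii) if $s<r$, then (a) implies (b).
   Context: $\langle X,Y\rangle=\sum_{i,j}X_{ij}Y_{ij}$, $\|\cdot\|_F$ the Frobenius norm, $\|\cdot\|_2$ the spectral norm, $\sigma_r(X)$ the $r$-th largest singular value. $f:\mathbb{R}^{m\times n}\to\mathbb{R}$ continuously differentiable; $A^1,\dots,A^l\in\mathbb{R}^{m\times n}$, $b\in\mathbb{R}^l$; $\mathcal{A}(X)=(\langle A^1,X\rangle,\dots,\langle A^l,X\rangle)^\top$; $\mathcal{L}=\{X:\mathcal{A}(X)=b\}$; $\mathcal{M}(r)=\{X:\operatorname{rank}X\le r\}$ with $0\le r<n\le m$. Lagrangian $L(X;y)=f(X)+\sum_{i=1}^ly_i(\langle A^i,X\rangle-b_i)$. $\Pi_{\mathcal{M}(r)}(Z)=\operatorname{argmin}_{Y\in\mathcal{M}(r)}\|Y-Z\|_F$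 (a set). For closed $\Omega$, $X\in\Omega$: $\mathrm{T}^B_\Omega(X)$ is the set of $\Xi$ with $X^k\in\Omega$, $X^k\to X$, $t_k\downarrow0$, $(X^k-X)/t_k\to\Xi$; $\mathrm{N}^F_\Omega(X)=\{Y:\langle Y,\Xi\rangle\le0\ \forall\Xi\in\mathrm{T}^B_\Omega(X)\}$. *)

(* Defs.v *)
From HB Require Import structures.
From mathcomp Require Import all_boot all_order all_algebra.
From mathcomp Require Import all_classical all_reals all_analysis.
Set Implicit Arguments. Unset Strict Implicit. Unset Printing Implicit Defensive.
Import Order.TTheory GRing.Theory Num.Theory.
Import numFieldNormedType.Exports.
Local Open Scope classical_set_scope.
Local Open Scope ring_scope.

Section Defs.
Variable R : realType.

Definition frob_inner {m n : nat} (X Y : 'M[R]_(m, n)) : R :=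
  \sum_(i < m) \sum_(j < n) X i j * Y i j.

Definition frob_norm {m n : nat} (X : 'M[R]_(m, n)) : R :=
  Num.sqrt (frob_inner X X).

Definition spec_norm {m n : nat} (G : 'M[R]_(m, n)) : R :=
  sup [set frob_norm (G *m v) | v in [set v : 'cV[R]_n | frob_norm v = 1]].

Definition is_svd {m n : nat} (X : 'M[R]_(m, n)) (U : 'M[R]_m)
    (s : nat -> R) (V : 'M[R]_n) : Prop :=
  [/\ U^T *m U = 1%:M, V^T *m V = 1%:M,
      (forall k, (k < n)%N -> 0 <= s k) /\
      (forall k k', (k <= k')%N -> (k' < n)%N -> s k' <= s k),
      (forall k, (n <= k)%N -> s k = 0) &
      X = U *m (\matrix_(i < m, j < n) (if (i : nat) == j then s i else 0))
          *m V^T].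

(* sigma_k(X): the k-th largest singular value (1-indexed, k >= 1) *)
Definition sing_val {m n : nat} (k : nat) (X : 'M[R]_(m, n)) : R :=
  xget 0 [set x | exists U s V, is_svd X U s V /\ x = s k.-1].

Definition lowrank (m n r : nat) : set 'M[R]_(m, n) :=
  [set X | (\rank X <= r)%N].

Definition proj_lowrank {m n : nat} (r : nat) (Z : 'M[R]_(m, n))
  : set 'M[R]_(m, n) :=
  [set Y | Y \in @lowrank m n r /\
     forall W, W \in @lowrank m n r -> frob_norm (Y - Z) <= frob_norm (W - Z)].

Definition bouligand_tangent {m n : nat} (Om : set 'M[R]_(m, n))
    (X : 'M[R]_(m, n)) : set 'M[R]_(m, n) :=
  [set Xi | exists (Xs : nat -> 'M[R]_(m, n)) (t : nat -> R),
     [/\ (forall k, Om (Xs k)) /\ Xs @ \oo --> X,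
         forall k, 0 < t k,
         {homo t : i j / (i <= j)%N >-> j <= i},
         t @ \oo --> 0 &
         (fun k => (t k)^-1 *: (Xs k - X)) @ \oo --> Xi]].

Definition frechet_normal {m n : nat} (Om : set 'M[R]_(m, n))
    (X : 'M[R]_(m, n)) : set 'M[R]_(m, n) :=
  [set Y | forall Xi, bouligand_tangent Om X Xi -> frob_inner Y Xi <= 0].

Definition is_gradient {m n : nat} (F : 'M[R]_(m, n) -> R)
    (G X : 'M[R]_(m, n)) : Prop :=
  differentiable F X /\ forall H, 'd F X H = frob_inner G H.

Definition C1 {m n : nat} (F : 'M[R]_(m, n) -> R) : Prop :=
  exists gF : 'M[R]_(m, n) -> 'M[R]_(m, n),
    continuous gF /\ forall X, is_gradient F (gF X) X.

Definition lin_op {m n l : nat} (A : 'I_l -> 'M[R]_(m, n))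
    (X : 'M[R]_(m, n)) : 'cV[R]_l :=
  \col_(i < l) frob_inner (A i) X.

Definition lagrangian {m n l : nat} (f : 'M[R]_(m, n) -> R)
    (A : 'I_l -> 'M[R]_(m, n)) (b : 'cV[R]_l) (X : 'M[R]_(m, n))
    (y : 'cV[R]_l) : R :=
  f X + \sum_(i < l) y i 0 * (frob_inner (A i) X - b i 0).

End Defs.
Arguments lowrank {R} m n r.

(* Main.v *)
Require Import Defs.
From HB Require Import structures.
From mathcomp Require Import all_boot all_order all_algebra.
From mathcomp Require Import all_classical all_reals all_analysis.
From mathcomp Require Import ring lra zify.
Import Order.TTheory GRing.Theory Num.Theory.
Import numFieldNormedType.Exports.
Local Open Scope classical_set_scope.
Local Open Scope ring_scope.

Section Helpers.
Variable R : realType.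

Lemma frobE {m n} (A B : 'M[R]_(m,n)) : frob_inner A B = \tr (A^T *m B).
Proof.
rewrite /frob_inner /mxtrace exchange_big; apply: eq_bigr => j _; rewrite mxE.
by apply: eq_bigr => i _; rewrite mxE.
Qed.

Lemma frob_ge0 {m n} (A : 'M[R]_(m,n)) : 0 <= frob_inner A A.
Proof. by apply: sumr_ge0 => i _; apply: sumr_ge0 => j _; rewrite -expr2 sqr_ge0. Qed.

Lemma frob_eq0 {m n} (A : 'M[R]_(m,n)) : frob_inner A A = 0 -> A = 0.
Proof.
move=> h; apply/matrixP => i j; rewrite mxE.
have h1 := psumr_eq0P (fun i _ => sumr_ge0 _ (fun j _ => sqr_ge0 (A i j))) h.
have h2 := psumr_eq0P (fun j _ => sqr_ge0 (A i j)) (h1 i isT).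
by have /eqP := h2 j isT; rewrite sqrf_eq0 => /eqP.
Qed.

Lemma frob_sym {m n} (A B : 'M[R]_(m,n)) : frob_inner A B = frob_inner B A.
Proof. by apply: eq_bigr => i _; apply: eq_bigr => j _; rewrite mulrC. Qed.

Lemma frobDl {m n} (A B C : 'M[R]_(m,n)) :
  frob_inner (A + B) C = frob_inner A C + frob_inner B C.
Proof.
rewrite /frob_inner -big_split; apply: eq_bigr => i _; rewrite -big_split.
by apply: eq_bigr => j _; rewrite mxE mulrDl.
Qed.

Lemma frobZl {m n} a (A C : 'M[R]_(m,n)) :
  frob_inner (a *: A) C = a * frob_inner A C.
Proof.
rewrite /frob_inner mulr_sumr; apply: eq_bigr => i _; rewrite mulr_sumr.
by apply: eq_bigr => j _; rewrite mxE mulrA.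
Qed.

Lemma frobNl {m n} (A C : 'M[R]_(m,n)) : frob_inner (- A) C = - frob_inner A C.
Proof. by rewrite -scaleN1r frobZl mulN1r. Qed.

Lemma frobDr {m n} (A B C : 'M[R]_(m,n)) :
  frob_inner C (A + B) = frob_inner C A + frob_inner C B.
Proof. by rewrite frob_sym frobDl !(frob_sym C). Qed.

Lemma frobZr {m n} a (A C : 'M[R]_(m,n)) :
  frob_inner C (a *: A) = a * frob_inner C A.
Proof. by rewrite frob_sym frobZl frob_sym. Qed.

Lemma frobNr {m n} (A C : 'M[R]_(m,n)) : frob_inner C (- A) = - frob_inner C A.
Proof. by rewrite frob_sym frobNl frob_sym. Qed.

Lemma frob0l {m n} (C : 'M[R]_(m,n)) : frob_inner 0 C = 0.
Proof. by rewrite -(scale0r 0) frobZl mul0r. Qed.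

Lemma frob_norm0 {m n} : frob_norm (0 : 'M[R]_(m,n)) = 0.
Proof. by rewrite /frob_norm frob0l sqrtr0. Qed.

Lemma frob_delta {m n} (A : 'M[R]_(m,n)) i j : frob_inner A (delta_mx i j) = A i j.
Proof.
rewrite /frob_inner (bigD1 i) //= (bigD1 j) //= !mxE !eqxx mulr1.
rewrite big1 ?addr0; last by move=> k /negbTE kj; rewrite mxE eqxx kj mulr0.
rewrite big1 ?addr0 // => k /negbTE ki; apply: big1 => l _.
by rewrite mxE ki mulr0.
Qed.

Lemma rank_add_le {m n} (A B : 'M[R]_(m,n)) : (\rank (A + B)%R <= \rank A + \rank B)%N.
Proof.
apply: leq_trans (mxrank_adds_leqif A B).1.
by apply: mxrankS; exact: addmx_sub_adds (submx_refl A) (submx_refl B).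
Qed.

Lemma tangent_line {m n} (Om : set 'M[R]_(m,n)) X Xi :
  (forall t : R, 0 < t -> Om (X + t *: Xi)) -> bouligand_tangent Om X Xi.
Proof.
move=> hO; exists (fun k => X + harmonic k *: Xi), harmonic; split.
- split; first by move=> k; apply: hO; exact: harmonic_gt0.
  rewrite -{2}(addr0 X); apply: cvgD; first exact: cvg_cst.
  rewrite -(scale0r Xi); apply: cvgZ; first exact: cvg_harmonic.
  exact: cvg_cst.
- by move=> k; exact: harmonic_gt0.
- move=> i j ij; rewrite /harmonic /=.
  by rewrite lef_pV2 ?posrE ?ltr0n // ler_nat.
- exact: cvg_harmonic.
- have -> : (fun k => (harmonic k)^-1 *: (X + harmonic k *: Xi - X)) = fun=> Xi.
    apply: funext => k; rewrite addrC addKr scalerA mulVf ?scale1r //.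
    by rewrite gt_eqF // harmonic_gt0.
  exact: cvg_cst.
Qed.

Lemma cvg_frob {m n} {A B : nat -> 'M[R]_(m,n)} {A0 B0} :
  A @ \oo --> A0 -> B @ \oo --> B0 ->
  (fun k => frob_inner (A k) (B k)) @ \oo --> frob_inner A0 B0.
Proof.
move=> hA hB; rewrite /frob_inner.
apply: cvg_big => [|i _]; first exact: add_continuous.
apply: cvg_big => [|j _]; first exact: add_continuous.
apply: cvgM.
  exact: (continuous_cvg _ (@coord_continuous R m n i j A0) hA).
exact: (continuous_cvg _ (@coord_continuous R m n i j B0) hB).
Qed.


Lemma part_i {m n} r (X G : 'M[R]_(m,n)) alpha : 0 < alpha ->
  proj_lowrank r (X - alpha *: G) X -> frechet_normal (lowrank m n r) X (- G).
Proof.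
move=> ha [_ hW] Xi [Xs [t [[hXs cXs] tpos _ t0 cY]]].
set Y := fun k => (t k)^-1 *: (Xs k - X).
have key0 : forall (D : 'M[R]_(m,n)) (tt : R), 0 < tt ->
    frob_norm (alpha *: G) <= frob_norm (tt *: D + alpha *: G) ->
    0 <= tt * frob_inner D D + 2 * alpha * frob_inner D G.
  move=> D tt tk; rewrite /frob_norm ler_sqrt ?frob_ge0 // frobDl !frobDr !frobZl !frobZr.
  have eS := frob_sym G D; move=> h.
  have : 0 <= tt * (tt * frob_inner D D + 2 * alpha * frob_inner D G) by nra.
  by rewrite pmulr_rge0.
have key : forall k, 0 <= t k * frob_inner (Y k) (Y k) + 2 * alpha * frob_inner (Y k) G.
  move=> k; have := hW (Xs k) (mem_set (hXs k)).
  have eD : Xs k - (X - alpha *: G) = t k *: Y k + alpha *: G.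
    rewrite /Y scalerA mulfV ?gt_eqF // scale1r.
    by rewrite opprB [alpha *: G - X]addrC addrA.
  have eX : X - (X - alpha *: G) = alpha *: G by rewrite opprB addrC subrK.
  by rewrite eD eX; apply: key0.
have cu : (fun k => t k * frob_inner (Y k) (Y k) + 2 * alpha * frob_inner (Y k) G)
   @ \oo --> 0 * frob_inner Xi Xi + 2 * alpha * frob_inner Xi G.
  apply: cvgD; first exact: (cvgM t0 (cvg_frob cY cY)).
  by apply: cvgM; [exact: cvg_cst | exact: (cvg_frob cY (cvg_cst G))].
have := limr_ge (cvgP _ cu) (nearW _ key).
rewrite (cvg_lim _ cu) // mul0r add0r => h.
have {}h : 0 <= 2 * alpha * frob_inner Xi G by apply: h.
rewrite frobNl frob_sym oppr_le0.
by move: h; rewrite -mulrA pmulr_rge0 // pmulr_rge0.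
Qed.


Lemma frob_sqD {m n} (A B : 'M[R]_(m,n)) :
  frob_inner (A + B) (A + B) = frob_inner A A + 2 * frob_inner A B + frob_inner B B.
Proof. rewrite frobDl !frobDr (frob_sym B A); ring. Qed.

Lemma frob_sqB {m n} (A B : 'M[R]_(m,n)) :
  frob_inner (A - B) (A - B) = frob_inner A A - 2 * frob_inner A B + frob_inner B B.
Proof. rewrite frob_sqD frobNr frobNl frobNr opprK; ring. Qed.

Definition symidem {n} (P : 'M[R]_n) := P^T = P /\ P *m P = P.

Lemma symidemC {n} (P : 'M[R]_n) : symidem P -> symidem (1%:M - P).
Proof.
move=> [h1 h2]; split; first by rewrite linearB /= trmx1 h1.
by rewrite mulmxBl mul1mx mulmxBr mulmx1 h2 subrr subr0.
Qed.

Arguments symidemC {n P}.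

Lemma cross0 {m n} (P : 'M[R]_n) (A B : 'M[R]_(m,n)) : symidem P ->
  frob_inner (A *m P) (B *m (1%:M - P)) = 0.
Proof.
move=> [h1 h2]; rewrite frobE trmx_mul h1 -mulmxA mxtrace_mulC -!mulmxA.
by rewrite mulmxBl mul1mx h2 subrr !mulmx0 mxtrace0.
Qed.

Lemma pyth {m n} (P : 'M[R]_n) (S : 'M[R]_(m,n)) : symidem P ->
  frob_inner S S = frob_inner (S *m P) (S *m P) +
     frob_inner (S *m (1%:M - P)) (S *m (1%:M - P)).
Proof.
move=> hP; have eS : S = S *m P + S *m (1%:M - P).
  by rewrite mulmxBr mulmx1 addrC subrK.
transitivity (frob_inner (S *m P + S *m (1%:M - P)) (S *m P + S *m (1%:M - P))).
  by rewrite -eS.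
by rewrite frob_sqD cross0 // mulr0 addr0.
Qed.

Arguments pyth {m n P}.

Lemma trsq {n} (P F : 'M[R]_n) : symidem P ->
  frob_inner (F *m P) (F *m P) = \tr (F^T *m F *m P).
Proof.
move=> [h1 h2]; rewrite frobE trmx_mul h1 -mulmxA mxtrace_mulC.
by rewrite [in LHS]mulmxA -(mulmxA F P P) h2 mxtrace_mulC.
Qed.

Lemma core {m n} (X N W : 'M[R]_(m,n)) (P Q : 'M[R]_n) (sg : R) :
  N^T *m X = 0 -> N *m Q = 0 -> symidem P -> symidem Q -> W *m P = W ->
  \tr P <= \tr Q ->
  (forall F : 'M[R]_n, frob_inner (N *m F) (N *m F) <= sg ^+ 2 * frob_inner F F) ->
  (forall F : 'M[R]_n, sg ^+ 2 * \tr (F^T *m Q *m F) <= frob_inner (X *m F) (X *m F)) ->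
  frob_inner N N <= frob_inner (W - (X - N)) (W - (X - N)).
Proof.
move=> hNX hNQ hP hQ hWP htr C1 C2.
set S := W - (X - N).
have hP' := symidemC hP; have hQ' := symidemC hQ.
have eS : S *m (1%:M - P) = N *m (1%:M - P) - X *m (1%:M - P).
  rewrite /S [(W - _) *m _]mulmxBl [W *m _]mulmxBr mulmx1 hWP subrr add0r.
  by rewrite mulmxBl opprB.
have cNX : frob_inner (N *m (1%:M - P)) (X *m (1%:M - P)) = 0.
  rewrite frobE trmx_mul -mulmxA (mulmxA N^T) hNX mul0mx mulmx0 mxtrace0 //.
have h1 := pyth S hP.
have h2 := pyth N hP.
have hSP := frob_ge0 (S *m P).
rewrite eS (frob_sqB (N *m _)) cNX mulr0 subr0 in h1.
suff key : frob_inner (N *m P) (N *m P) <=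
    frob_inner (X *m (1%:M - P)) (X *m (1%:M - P)).
  rewrite h1 h2; lra.
have eN : N *m P = N *m ((1%:M - Q) *m P).
  by rewrite mulmxA mulmxBr mulmx1 hNQ subr0.
rewrite eN; apply: le_trans (C1 _) _.
apply: le_trans (C2 _).
have [q1 q2] := hQ; have [p1 p2] := hP.
have [q1' q2'] := hQ'; have [p1' p2'] := hP'.
have e1 : frob_inner ((1%:M - Q) *m P) ((1%:M - Q) *m P) = \tr P - \tr (Q *m P).
  rewrite trsq // q1' q2' mulmxBl mul1mx linearB //.
have e2 : \tr ((1%:M - P)^T *m Q *m (1%:M - P)) = \tr Q - \tr (Q *m P).
  by rewrite p1' mxtrace_mulC mulmxA p2' mulmxBl mul1mx linearB /= (mxtrace_mulC P).
rewrite e1 e2; apply: ler_wpM2l; first exact: sqr_ge0.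
by rewrite lerD2r.
Qed.


Lemma AAt0 {m n} (A : 'M[R]_(m,n)) : A *m A^T = 0 -> A = 0.
Proof.
move=> h; have : frob_inner A^T A^T = 0 by rewrite frobE trmxK h mxtrace0.
by move/frob_eq0 => /(congr1 trmx); rewrite trmxK trmx0.
Qed.

Lemma proj_exists {m n} (W : 'M[R]_(m,n)) :
  exists P : 'M[R]_n, [/\ symidem P, W *m P = W & \tr P = (\rank W)%:R].
Proof.
have [B [hBf hWB]] : exists B : 'M[R]_(\rank W, n), row_free B /\ (W <= B)%MS.
  by exists (row_base W); split; [exact: row_base_free | rewrite eq_row_base].
pose M := B *m B^T.
have hK : kermx M = 0.
  have hKM := mulmx_ker M.
  have : (kermx M *m B) *m (kermx M *m B)^T = 0.
    by rewrite trmx_mul mulmxA -(mulmxA _ B) hKM mul0mx.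
  move/AAt0 => /eqP; rewrite mulmx_free_eq0 //.
  by move/eqP.
have hM : M \in unitmx.
  rewrite -row_free_unit /row_free.
  have := mxrank_ker M; rewrite hK mxrank0 => e.
  by have := rank_leq_row M; move=> h; apply/eqP; lia.
exists (B^T *m invmx M *m B); split.
- split.
    by rewrite !trmx_mul trmxK trmx_inv /M trmx_mul trmxK mulmxA.
  rewrite !mulmxA -(mulmxA _ B (B^T)) -/M mulmxKV //.
- move: (W *m pinvmx B) (mulmxKpV hWB) => C eC.
  by rewrite -{1}eC !mulmxA -(mulmxA C B) -/M mulmxK.
- rewrite -mulmxA mxtrace_mulC -mulmxA -/M mulVmx // mxtrace1.
  by [].
Qed.

Lemma part_iii {m n} r (X G : 'M[R]_(m,n)) : (\rank X < r)%N ->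
  frechet_normal (lowrank m n r) X (- G) -> G = 0.
Proof.
move=> hs ha; apply/matrixP => i j; rewrite mxE.
have T : forall c : R, bouligand_tangent (lowrank m n r) X (c *: delta_mx i j).
  move=> c; apply: tangent_line => t _; rewrite /lowrank /=.
  apply: leq_trans (rank_add_le _ _) _.
  have : (\rank (t *: (c *: delta_mx i j)) <= \rank (delta_mx i j : 'M[R]_(m,n)))%N.
    by apply: mxrankS; apply: scalemx_sub; apply: scalemx_sub.
  rewrite mxrank_delta; lia.
have h1 := ha _ (T 1); have h2 := ha _ (T (-1)).
rewrite frobNl frobZr frob_delta in h1.
rewrite frobNl frobZr frob_delta in h2.
lra.
Qed.

Lemma b_triv {m n} r (X G : 'M[R]_(m,n)) alpha : G = 0 -> X \in lowrank m n r ->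
  proj_lowrank r (X - alpha *: G) X.
Proof.
move=> -> hX; split => // W _.
by rewrite scaler0 subr0 subrr frob_norm0 /frob_norm sqrtr_ge0.
Qed.



Lemma sum_ge_term {I : finType} (F : I -> R) j : (forall i, 0 <= F i) ->
  F j <= \sum_i F i.
Proof. by move=> h; rewrite (bigD1 j) //= lerDl sumr_ge0. Qed.

Lemma entry_le1 {n} (w : 'cV[R]_n) j : frob_inner w w = 1 -> `|w j 0| <= 1.
Proof.
move=> hw.
have h1 : w j 0 * w j 0 <= 1.
  rewrite -hw /frob_inner.
  apply: le_trans (sum_ge_term _ j (fun i => sumr_ge0 _ (fun k _ => sqr_ge0 (w i k)))).
  exact: (sum_ge_term (fun k => w j k * w j k) 0 (fun k => sqr_ge0 (w j k))).
have h2 : `|w j 0| * `|w j 0| = w j 0 * w j 0.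
  by rewrite -normrM ger0_norm // -expr2 sqr_ge0.
have h3 := normr_ge0 (w j 0).
nra.
Qed.

Lemma spec_bound {m n} (G : 'M[R]_(m,n)) (x : 'cV[R]_n) :
  frob_inner (G *m x) (G *m x) <= spec_norm G ^+ 2 * frob_inner x x.
Proof.
have [->|xn0] := eqVneq x 0; first by rewrite mulmx0 !frob0l mulr0.
set c := frob_inner x x.
have c0 : 0 < c.
  rewrite lt_def frob_ge0 andbT; apply/eqP => /frob_eq0 h.
  by rewrite h eqxx in xn0.
set q := Num.sqrt c.
have q0 : 0 < q by rewrite sqrtr_gt0.
have qq : q * q = c by rewrite -expr2 sqr_sqrtr // ltW.
set v := q^-1 *: x.
have fv : frob_inner v v = 1.
  rewrite frobZl frobZr -/c -qq; field; exact: lt0r_neq0.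
have hv : frob_norm v = 1 by rewrite /frob_norm fv sqrtr1.
set S := [set frob_norm (G *m w) | w in [set w : 'cV[R]_n | frob_norm w = 1]].
have hS : has_sup S.
  split; first by exists (frob_norm (G *m v)); exists v.
  exists (Num.sqrt (\sum_i (\sum_j `|G i j|) ^+ 2)).
  move=> y [w hw <-].
  have fw : frob_inner w w = 1.
    by rewrite -(sqr_sqrtr (frob_ge0 w)) -/(frob_norm w) hw expr1n.
  rewrite /frob_norm ler_sqrt; last by apply: sumr_ge0 => i _; exact: sqr_ge0.
  apply: ler_sum => i _; rewrite big_ord1 mxE -expr2.
  have hb : `|\sum_j G i j * w j 0| <= \sum_j `|G i j|.
    apply: le_trans (ler_norm_sum _ _ _) _.
    apply: ler_sum => j _; rewrite normrM.
    have := entry_le1 w j fw; have := normr_ge0 (G i j); have := normr_ge0 (w j 0).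
    nra.
  rewrite -real_normK ?num_real //.
  apply: ler_pM => //; exact: normr_ge0.
have ub : frob_norm (G *m v) <= spec_norm G.
  by apply: (sup_upper_bound hS); exists v.
have ng := sqrtr_ge0 (frob_inner (G *m v) (G *m v)).
have e1 : frob_inner (G *m v) (G *m v) = frob_norm (G *m v) ^+ 2.
  by rewrite /frob_norm sqr_sqrtr // frob_ge0.
have h1 : frob_inner (G *m v) (G *m v) <= spec_norm G ^+ 2.
  rewrite e1; rewrite /frob_norm in ub *; nra.
rewrite /v -scalemxAr frobZl frobZr in h1.
have e2 : frob_inner (G *m x) (G *m x) =
    (q * q) * (q^-1 * (q^-1 * frob_inner (G *m x) (G *m x))).
  field; exact: lt0r_neq0.
rewrite e2 qq mulrC; apply: ler_wpM2r => //; exact: ltW.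
Qed.

Lemma frob_colsum {m n p} (A : 'M[R]_(m,n)) (F : 'M[R]_(n,p)) :
  frob_inner (A *m F) (A *m F) = \sum_j frob_inner (A *m col j F) (A *m col j F).
Proof.
rewrite /frob_inner exchange_big; apply: eq_bigr => j _.
apply: eq_bigr => i _; rewrite big_ord1.
have -> : (A *m col j F) i 0 = (A *m F) i j.
  by rewrite !mxE; apply: eq_bigr => l _; rewrite mxE.
by [].
Qed.

Lemma mat_bound {m n p} (N : 'M[R]_(m,n)) (F : 'M[R]_(n,p)) :
  frob_inner (N *m F) (N *m F) <= spec_norm N ^+ 2 * frob_inner F F.
Proof.
have eF : frob_inner F F = \sum_j frob_inner (col j F) (col j F).
  rewrite -{1 2}(mul1mx F) frob_colsum.
  by apply: eq_bigr => j _; rewrite mul1mx.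
rewrite frob_colsum eF mulr_sumr; apply: ler_sum => j _; exact: spec_bound.
Qed.

Definition Dm {m n} (s : nat -> R) : 'M[R]_(m,n) :=
  \matrix_(i < m, j < n) (if (i : nat) == j then s i else 0).

Lemma DtD {m n} (s : nat -> R) : (n <= m)%N ->
  (@Dm m n s)^T *m (@Dm m n s) = diag_mx (\row_k (s k ^+ 2)).
Proof.
move=> hnm; apply/matrixP => k l; rewrite !mxE.
rewrite (bigD1 (widen_ord hnm k)) //= !mxE eqxx big1 ?addr0; last first.
  move=> i hi; rewrite !mxE; case: eqP => [e|_]; last by rewrite mul0r.
  by exfalso; move/negP: hi; apply; apply/eqP/val_inj.
have -> : ((k : nat) == l) = (k == l) by [].
by case: eqP => _; [rewrite mulr1n expr2 | rewrite mulr0n mulr0].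
Qed.

Definition Em n r : 'M[R]_n := diag_mx (\row_(k < n) ((k < r)%N)%:R).

Lemma sum_lt n r : (r <= n)%N -> \sum_(k < n) (((k < r)%N)%:R : R) = r%:R.
Proof.
move=> h; rewrite -natr_sum; congr (_%:R).
suff H : forall n', (\sum_(k < n') ((k < r)%N : nat))%N = minn r n'.
  by rewrite H; lia.
elim=> [|n' IH]; first by rewrite big_ord0 minn0.
by rewrite big_ord_recr /= IH; case: ltnP => h'; lia.
Qed.

Lemma Em_symidem n r : symidem (Em n r).
Proof.
split; first exact: tr_diag_mx.
rewrite /Em mulmx_diag; congr diag_mx; apply/matrixP => i j; rewrite !mxE.
by case: (_ < _)%N; rewrite ?mulr1 ?mulr0.
Qed.

Lemma trdiag {n p} (H : 'M[R]_(n,p)) d :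
  \tr (H^T *m diag_mx d *m H) = \sum_i \sum_j d 0 i * H i j ^+ 2.
Proof.
rewrite mul_mx_diag /mxtrace; under eq_bigr do rewrite mxE.
rewrite exchange_big; apply: eq_bigr => i _; apply: eq_bigr => j _.
by rewrite !mxE expr2; ring.
Qed.

Lemma conj_symidem {n} (V E : 'M[R]_n) : V^T *m V = 1%:M -> symidem E ->
  symidem (V *m E *m V^T).
Proof.
move=> hV [e1 e2]; split; first by rewrite !trmx_mul trmxK e1 mulmxA.
by rewrite !mulmxA -(mulmxA _ V^T V) hV mulmx1 -(mulmxA V E E) e2.
Qed.

Lemma conj_tr {n} (V E : 'M[R]_n) : V^T *m V = 1%:M -> \tr (V *m E *m V^T) = \tr E.
Proof. by move=> hV; rewrite mxtrace_mulC mulmxA hV mul1mx. Qed.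

Lemma stat_ortho {m n} r (X G : 'M[R]_(m,n)) : X \in lowrank m n r ->
  frechet_normal (lowrank m n r) X (- G) -> X *m G^T = 0 /\ G^T *m X = 0.
Proof.
move=> hX ha; have hXr : (\rank X <= r)%N := set_mem hX.
have tP : forall P : 'M[R]_m, frob_inner G (P *m X) = 0.
  move=> P; have t1 : forall c : R, bouligand_tangent (lowrank m n r) X (c *: (P *m X)).
    move=> c; apply: tangent_line => t _; rewrite /lowrank /=.
    have -> : X + t *: (c *: (P *m X)) = (1%:M + (t * c) *: P) *m X.
      by rewrite mulmxDl mul1mx scalerA scalemxAl.
    exact: leq_trans (mxrankM_maxr _ _) hXr.
  have h1 := ha _ (t1 1); have h2 := ha _ (t1 (-1)).
  rewrite frobNl frobZr in h1; rewrite frobNl frobZr in h2; lra.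
have tQ : forall Q : 'M[R]_n, frob_inner G (X *m Q) = 0.
  move=> Q; have t1 : forall c : R, bouligand_tangent (lowrank m n r) X (c *: (X *m Q)).
    move=> c; apply: tangent_line => t _; rewrite /lowrank /=.
    have -> : X + t *: (c *: (X *m Q)) = X *m (1%:M + (t * c) *: Q).
      by rewrite mulmxDr mulmx1 scalerA scalemxAr.
    exact: leq_trans (mxrankM_maxl _ _) hXr.
  have h1 := ha _ (t1 1); have h2 := ha _ (t1 (-1)).
  rewrite frobNl frobZr in h1; rewrite frobNl frobZr in h2; lra.
split.
  apply: frob_eq0; rewrite frobE trmx_mul trmxK.
  have := tP (G *m X^T); rewrite frobE mxtrace_mulC => <-.
  by rewrite !mulmxA.
have : X^T *m G = 0.
  apply: frob_eq0; rewrite frobE trmx_mul trmxK.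
  have := tQ (X^T *m G); rewrite frobE => <-.
  by rewrite !mulmxA.
by move/(congr1 trmx); rewrite trmx_mul trmxK trmx0.
Qed.
Lemma part_ii {m n} r (X G : 'M[R]_(m,n)) alpha : (n <= m)%N -> (r < n)%N ->
  X \in lowrank m n r -> 0 < alpha ->
  (G != 0 -> alpha <= sing_val r X / spec_norm G) ->
  frechet_normal (lowrank m n r) X (- G) -> proj_lowrank r (X - alpha *: G) X.
Proof.
move=> hnm hrn hX ha hb hA.
have [->|G0] := eqVneq G 0; first exact: b_triv.
have hb' := hb G0.
have [XG GX] := stat_ortho r X G hX hA.
pose P0 := [set x | exists U s V, @is_svd R m n X U s V /\ x = s r.-1].
change (is_true (alpha <= xget 0 P0 / spec_norm G)) in hb'.
case: (pselect (exists x, P0 x)) => [hex|hnex]; last first.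
  rewrite xgetPN ?mul0r in hb'; first by move: ha; rewrite ltNge hb'.
  by move=> x hx; apply: hnex; exists x.
have [U [s [V [hsvd hsig]]]] := xgetPex 0 hex.
rewrite hsig in hb'; set sg := s r.-1 in hb'.
case: hsvd => hU hV [s0 sdec] _ eX.
have rn1 : (r.-1 < n)%N by lia.
have sg0 : 0 <= sg := s0 _ rn1.
set sp := spec_norm G in hb'.
have sp0 : 0 < sp.
  rewrite ltNge; apply/negP => hsp.
  have : sg / sp <= 0 by apply: mulr_ge0_le0 => //; rewrite invr_le0.
  move=> h; have := le_trans hb' h; by rewrite leNgt ha.
have asp : alpha * sp <= sg by rewrite -ler_pdivlMr.
have sgpos : 0 < sg by apply: lt_le_trans asp; exact: mulr_gt0.
have sk : forall k : 'I_n, (k < r)%N -> sg <= s k.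
  move=> k hk; apply: sdec => //; lia.
pose N := alpha *: G.
have eXN : X - (X - alpha *: G) = N by rewrite opprB addrC subrK.
split => // W hW; rewrite eXN /frob_norm ler_sqrt ?frob_ge0 //.
have [P [hP hWP htrP]] := proj_exists W.
pose Q := V *m Em n r *m V^T.
have hQ : symidem Q := conj_symidem V (Em n r) hV (Em_symidem n r).
pose Dl := diag_mx (\row_(k < n) (s k ^+ 2)).
have XtX : X^T *m X = V *m Dl *m V^T.
  rewrite /Dl eX !trmx_mul trmxK -(DtD s hnm).
  rewrite !mulmxA -(mulmxA _ U^T U) hU mulmx1.
  by rewrite -!mulmxA.
apply: (@core m n X N W P Q sg) => //.
- by rewrite /N linearZ /= -scalemxAl GX scaler0.
- have XNt : X *m N^T = 0 by rewrite /N linearZ /= -scalemxAr XG scaler0.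
  pose D : 'M[R]_(m,n) := Dm s.
  have eX' : X = U *m D *m V^T := eX.
  have DY : Dl *m (V^T *m N^T) = 0.
    rewrite /Dl -(DtD s hnm) -/D -mulmxA.
    have : U^T *m (X *m N^T) = 0 by rewrite XNt mulmx0.
    by rewrite eX' !mulmxA hU mul1mx => h; rewrite -!mulmxA (mulmxA D) h mulmx0.
  have EY : Em n r *m (V^T *m N^T) = 0.
    move: (V^T *m N^T) DY => Y DY.
    apply/matrixP => k j; rewrite /Em mul_diag_mx !mxE.
    have := congr1 (fun M : 'M[R]_(n,m) => M k j) DY; rewrite /Dl mul_diag_mx !mxE /= => h.
    case: ltnP => hk; last by rewrite mul0r.
    rewrite mul1r; move/eqP: h; rewrite mulf_eq0 => /orP [|/eqP //].
    rewrite sqrf_eq0 => /eqP h0; have := sk k hk; rewrite h0 => h1.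
    by move: sgpos; rewrite ltNge h1.
  apply: trmx_inj; rewrite trmx_mul trmx0 hQ.1 /Q -!mulmxA EY mulmx0.
  by [].
- rewrite htrP /Q conj_tr // /Em mxtrace_diag.
  under eq_bigr do rewrite mxE.
  rewrite sum_lt ?ler_nat; [exact: set_mem hW | lia].
- move=> F; rewrite /N -scalemxAl frobZl frobZr mulrA.
  apply: le_trans (ler_wpM2l _ (mat_bound G F)) _.
    by apply: mulr_ge0; exact: ltW.
  rewrite mulrA; apply: ler_wpM2r; first exact: frob_ge0.
  rewrite -/sp; have := mulr_ge0 (ltW ha) (ltW sp0); nra.
- move=> F.
  have e1 : frob_inner (X *m F) (X *m F) = \tr ((V^T *m F)^T *m Dl *m (V^T *m F)).
    by rewrite frobE !trmx_mul trmxK !mulmxA -(mulmxA F^T X^T X) XtX !mulmxA.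
  have e2 : \tr (F^T *m Q *m F) = \tr ((V^T *m F)^T *m Em n r *m (V^T *m F)).
    by rewrite /Q trmx_mul trmxK !mulmxA.
  rewrite e1 e2 !trdiag mulr_sumr; apply: ler_sum => i _.
  rewrite mulr_sumr; apply: ler_sum => j _; rewrite !mxE mulrA.
  apply: ler_wpM2r; first exact: sqr_ge0.
  case: ltnP => hi; last by rewrite mulr0 sqr_ge0.
  rewrite mulr1; have := sk i hi; nra.
Qed.

End Helpers.

Theorem proposition4p1 (R : realType) (m n l r : nat)
  (f : 'M[R]_(m, n) -> R) (A : 'I_l -> 'M[R]_(m, n)) (b : 'cV[R]_l)
  (X : 'M[R]_(m, n)) (y : 'cV[R]_l) (alpha : R) (G : 'M[R]_(m, n)) :
  (n <= m)%N -> (r < n)%N ->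
  C1 f ->
  lin_op A X = b -> X \in lowrank m n r ->
  0 < alpha ->
  is_gradient (fun Z => lagrangian f A b Z y) G X ->
  let s := \rank X in
  let a_stat := frechet_normal (lowrank m n r) X (- G) in
  let b_stat := proj_lowrank r (X - alpha *: G) X in
  (* (i) *) (b_stat -> a_stat) /\
  (* (ii) alpha in (0, beta], beta = sigma_r(X)/||G||_2 or +oo if G = 0 *)
  ((s = r) -> (G != 0 -> alpha <= sing_val r X / spec_norm G) ->
     a_stat -> b_stat) /\
  (* (iii) *) ((s < r)%N -> a_stat -> b_stat).
Proof.
move=> hnm hrn _ _ hX ha _ s a_stat b_stat; split; last split.
- exact: part_i.
- by move=> _; exact: part_ii.
- by move=> hs hA; apply: b_triv => //; exact: part_iii hs hA.
Qed.
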